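(* Let $q\ge 2$ be even, let $m\ge 2$ and $n$ be integers, and let $\boldsymbol{x}\in\Sigma_q^n$ be an $m$-RCD root. If $\boldsymbol{y}=RC_{k,i}(\boldsymbol{x})$ for some integer $k\ge 3m-3$ and some position $i\in[1,n-k+1]$, then $\boldsymbol{y}_{[i+k,i+2k-1]}=\boldsymbol{y}_{[i,i+k-1]}^{RC}$, and $\boldsymbol{y}_{[j+k,j+2k-1]}\neq \boldsymbol{y}_{[j,j+k-1]}^{RC}$ for every integer $j$ with $1\le j<i$.
   Context: $\Sigma_q=\{0,1,\dots,q-1\}$, and $[a,b]=\{a,a+1,\dots,b\}$ (empty if $a>b$). For $\boldsymbol{x}=x_1\cdots x_n$, $\boldsymbol{x}_{[a,b]}=x_a\cdots x_b$. A complement operation is a fixed bijection $a\mapsto\overline{a}$ on $\Sigma_q$ with $\overline{a}\ne a$ and $\overline{\overline{a}}=a$ for all $a$ (so $q$ is even). For $\boldsymbol{x}=x_1\cdots x_n$, its reverse-complement is $\boldsymbol{x}^{RC}=\overline{x_n}\,\overline{x_{n-1}}\cdots\overline{x_1}$. For $\boldsymbol{x}=\boldsymbol{u}\boldsymbol{v}\boldsymbol{w}$ with $|\boldsymbol{u}|=i-1$, $|\boldsymbol{v}|=k$, the $k$-reverse-complement duplication at position $i$ gives $RC_{k,i}(\boldsymbol{x})=\boldsymbol{u}\boldsymbol{v}\boldsymbol{v}^{RC}\boldsymbol{w}$. A string $\boldsymbol{x}\in\Sigma_q^n$ is an $m$-RCD root if $\boldsymbol{x}_{[i+m,i+2m-1]}\ne\boldsymbol{x}_{[i,i+m-1]}^{RC}$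 for every $i\in[1,n-2m+1]$. *)

(* Defs.v *)
From mathcomp Require Import all_boot.
Set Implicit Arguments. Unset Strict Implicit. Unset Printing Implicit Defensive.

(* Strings over Sigma_q = 'I_q are sequences; positions are 1-indexed. *)

(* x_[a,b] = x_a ... x_b (1-indexed); empty if a > b. *)
Definition substr {T : Type} (x : seq T) (a b : nat) : seq T :=
  take (b.+1 - a) (drop a.-1 x).

Definition is_complement {T : eqType} (c : T -> T) : Prop :=
  (forall a, c a != a) /\ (forall a, c (c a) = a).

Definition rc {T : Type} (c : T -> T) (x : seq T) : seq T := rev (map c x).

(* k-reverse-complement duplication at position i: u v v^RC w with |u| = i-1, |v| = k *)
Definition RCdup {T : Type} (c : T -> T) (k i : nat) (x : seq T) : seq T :=
  let u := take i.-1 x in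
  let v := take k (drop i.-1 x) in
  let w := drop (i.-1 + k) x in
  u ++ v ++ rc c v ++ w.

Definition RCD_root {T : eqType} (c : T -> T) (m : nat) (x : seq T) : Prop :=
  forall i, 1 <= i <= size x + 1 - 2 * m ->
    substr x (i + m) (i + 2 * m - 1) != rc c (substr x i (i + m - 1)).

(* Main.v *)
Require Import Defs.
From mathcomp Require Import all_boot zify.

Lemma size_substr {T : Type} (y : seq T) a b : 1 <= a -> b <= size y -> size (substr y a b) = b.+1 - a.
Proof. move=> ha hb; rewrite /substr size_takel // size_drop -subn1; lia. Qed.

Lemma nth_substr {T : Type} x0 (y : seq T) a b t : t < b.+1 - a -> nth x0 (substr y a b) t = nth x0 y (a.-1 + t).
Proof. by move=> ht; rewrite /substr nth_take // nth_drop. Qed.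

Lemma win_iff {T : Type} (c : T -> T) x0 (y : seq T) p L : 1 <= p -> p + 2*L <= size y + 1 ->
 (substr y (p+L) (p+2*L-1) = rc c (substr y p (p+L-1)) <->
  forall t, t < L -> nth x0 y (p+L-1+t) = c (nth x0 y (p+L-2-t))).
Proof.
move=> hp hs.
have s1 : size (substr y (p+L) (p+2*L-1)) = L by rewrite size_substr; lia.
have s2 : size (substr y p (p+L-1)) = L by rewrite size_substr; lia.
have e1 t : t < L -> nth x0 (substr y (p+L) (p+2*L-1)) t = nth x0 y (p+L-1+t).
  by move=> ht; rewrite nth_substr; [congr nth; lia| lia].
have e2 t : t < L -> nth x0 (rc c (substr y p (p+L-1))) t = c (nth x0 y (p+L-2-t)).
  move=> ht; rewrite /rc nth_rev size_map s2 // (nth_map x0); last lia.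
  by rewrite nth_substr; [congr (c (nth _ _ _)); lia | lia].
split.
  by move=> E t ht; rewrite -e1 // E e2.
move=> H; apply: (eq_from_nth (x0 := x0)); first by rewrite /rc size_rev size_map s1 s2.
by move=> t; rewrite s1 => ht; rewrite e1 // e2 // H.
Qed.

Definition refl {T : Type} (c : T -> T) (f : nat -> T) e rho :=
  forall r, r < rho -> f (e + 1 + r) = c (f (e - r)).

Lemma refl_mono {T : Type} (c : T -> T) f e r1 r2 : r2 <= r1 -> refl c f e r1 -> refl c f e r2.
Proof. move=> h H r hr; apply: H; lia. Qed.

Lemma step {T : Type} (c : T -> T) (cc : forall a, c (c a) = a) f e d ra rb rho :
  d <= e -> refl c f (e + d) ra -> refl c f e rb -> rho <= ra -> rho <= rb - d ->
  refl c f (e - d) rho.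
Proof.
move=> hd Ha Hb h1 h2 r hr.
have E1 : f (e - d + 1 + r) = c (f (e + d - r)).
  case: (leqP d r) => hdr.
    have H := Hb (r - d) ltac:(lia).
    rewrite (_ : e - d + 1 + r = e + 1 + (r - d)); last lia.
    rewrite H; congr (c (f _)); lia.
  have H := Hb (d - 1 - r) ltac:(lia).
  rewrite (_ : e + 1 + (d - 1 - r) = e + d - r) in H; last lia.
  rewrite (_ : e - (d - 1 - r) = e - d + 1 + r) in H; last lia.
  by rewrite H cc.
have E2 : f (e + d - r) = c (f (e + 1 + (d + r))).
  have H := Ha r ltac:(lia).
  rewrite (_ : e + d + 1 + r = e + 1 + (d + r)) in H; last lia.
  by rewrite H cc.
have E3 := Hb (d + r) ltac:(lia).
rewrite (_ : e - d - r = e - (d + r)); last lia.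
by rewrite E1 E2 E3 cc.
Qed.

Lemma iter_refl {T : Type} (c : T -> T) (cc : forall a, c (c a) = a) f E2 d k :
  refl c f E2 k -> refl c f (E2 - d) k ->
  forall t, t * d + d <= E2 -> refl c f (E2 - t*d) (k - (t*d - d)) /\ refl c f (E2 - (t*d + d)) (k - t*d).
Proof.
move=> S2 S1; elim=> [|t IH] h.
  by rewrite mul0n sub0n subn0 subn0 add0n.
rewrite mulSn in h *.
have [_ H2] := IH ltac:(lia).
split.
  by rewrite (_ : d + t * d - d = t * d); [rewrite (_ : E2 - (d + t * d) = E2 - (t * d + d)) //; lia | lia].
rewrite (_ : E2 - (d + t * d + d) = (E2 - (t * d + d)) - d); last lia.
apply: (@step _ c cc f _ d (k - (t * d - d)) (k - t * d)); try lia.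
  by rewrite (_ : E2 - (t * d + d) + d = E2 - t * d); [exact: (proj1 (IH ltac:(lia))) | lia].
done.
Qed.

Lemma core {T : Type} (c : T -> T) (cc : forall a, c (c a) = a) (x0 : T) (x y : seq T) (m n k i j : nat) :
  2 <= m -> size x = n -> 3 * m - 3 <= k -> 1 <= i -> i + k <= n + 1 -> 1 <= j -> j < i ->
  (forall s, s < i.-1 + k -> nth x0 y s = nth x0 x s) ->
  (forall t, t < k -> nth x0 y (j + k - 1 + t) = c (nth x0 y (j + k - 2 - t))) ->
  (forall t, t < k -> nth x0 y (i + k - 1 + t) = c (nth x0 y (i + k - 2 - t))) ->
  exists p, [/\ 1 <= p, p + 2 * m <= n + 1 &
    forall t, t < m -> nth x0 x (p + m - 1 + t) = c (nth x0 x (p + m - 2 - t))].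
Proof.
move=> m2 sx hk hi hik hj1 hji nthy S1' S2'.
have S2 : refl c (nth x0 y) (i + k - 2) k.
  move=> r hr; rewrite (_ : i + k - 2 + 1 + r = i + k - 1 + r); last lia.
  by rewrite S2' //; congr (c (nth _ _ _)); lia.
have S1 : refl c (nth x0 y) (i + k - 2 - (i - j)) k.
  move=> r hr; rewrite (_ : i + k - 2 - (i - j) + 1 + r = j + k - 1 + r); last lia.
  by rewrite S1' //; congr (c (nth _ _ _)); lia.
have dpos : 0 < i - j by lia.
have hA1 := leq_divM (m - 1) (i - j).
have hA2 : m - 1 < (m - 1) %/ (i - j) * (i - j) + (i - j) by rewrite addnC -mulSn; exact: ltn_ceil.
have := iter_refl c cc (nth x0 y) (i + k - 2) (i - j) k S2 S1 ((m - 1) %/ (i - j)).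
move: hA1 hA2; generalize ((m - 1) %/ (i - j) * (i - j)) => A hA1 hA2 H.
have [_ R] := H ltac:(lia).
have Rm := @refl_mono _ c (nth x0 y) _ (k - A) m ltac:(lia) R.
exists (i + k - 2 - (A + (i - j)) + 2 - m); split; [lia | lia |].
move=> r hr'.
rewrite (_ : i + k - 2 - (A + (i - j)) + 2 - m + m - 1 + r = i + k - 2 - (A + (i - j)) + 1 + r); last lia.
rewrite (_ : i + k - 2 - (A + (i - j)) + 2 - m + m - 2 - r = i + k - 2 - (A + (i - j)) - r); last lia.
rewrite -!nthy; try lia.
exact: Rm.
Qed.

Theorem lemma1 (q : nat) (c : 'I_q -> 'I_q) (m n k i : nat) (x : seq 'I_q) :
  2 <= q -> ~~ odd q -> is_complement c ->
  2 <= m -> size x = n -> RCD_root c m x ->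
  3 * m - 3 <= k -> 1 <= i -> i + k <= n + 1 ->
  let y := RCdup c k i x in
  substr y (i + k) (i + 2 * k - 1) = rc c (substr y i (i + k - 1)) /\
  (forall j, 1 <= j < i ->
     substr y (j + k) (j + 2 * k - 1) != rc c (substr y j (j + k - 1))).
Proof.
move=> q2 qe [cn cc] m2 sx root hk hi hik y.
have x0 : 'I_q := Ordinal (ltnW q2).
have Yd : y = take i.-1 x ++ take k (drop i.-1 x) ++ rc c (take k (drop i.-1 x)) ++ drop (i.-1 + k) x by [].
clearbody y.
move: Yd; set u := take i.-1 x; set v := take k (drop i.-1 x); set w := drop (i.-1 + k) x => Yd.
have su : size u = i.-1 by rewrite size_takel; lia.
have sv : size v = k by rewrite size_takel // size_drop; lia.
have Yt : y = take (i.-1 + k) x ++ (rc c v ++ w) by rewrite Yd catA -takeD.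
have sw : size w = n - (i.-1 + k) by rewrite /w size_drop sx.
clearbody u v w.
have srv : size (rc c v) = k by rewrite /rc size_rev size_map.
have sy : size y = n + k by rewrite Yd !size_cat su sv srv sw; lia.
have nthy s : s < i.-1 + k -> nth x0 y s = nth x0 x s.
  move=> hs; rewrite Yt nth_cat size_takel; last lia.
  by rewrite hs nth_take.
have P1 : substr y (i + k) (i + 2 * k - 1) = rc c (substr y i (i + k - 1)).
  rewrite /substr (_ : (i + k).-1 = size (u ++ v)); last by rewrite size_cat su sv; lia.
  rewrite Yd catA drop_size_cat // (_ : (i + 2 * k - 1).+1 - (i + k) = size (rc c v)); last by rewrite srv; lia.
  rewrite take_size_cat // (_ : (i + k - 1).+1 - i = size v); last by rewrite sv; lia.
  by rewrite -catA (_ : i.-1 = size u) // drop_size_cat // take_size_cat.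
split=> //.
move=> j /andP [hj1 hji]; apply/eqP => E.
have S1' := (proj1 (win_iff c x0 y j k hj1 ltac:(lia))) E.
have S2' := (proj1 (win_iff c x0 y i k hi ltac:(lia))) P1.
have [p [hp1 hp2 Hp]] := core c cc x0 x y m n k i j m2 sx hk hi hik hj1 hji nthy S1' S2'.
have hpr : 1 <= p <= size x + 1 - 2 * m.
  rewrite sx; lia.
have := root p hpr.
have hp2x : p + 2 * m <= size x + 1 by rewrite sx.
by rewrite (proj2 (win_iff c x0 x p m hp1 hp2x) Hp) eqxx.
Qed.
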